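(* Consider Method 3.2 (described in the context) and suppose it does not terminate. Then for every limit point $(\bar x,\bar\sigma)$ of the sequence $\{(x_k,\sigma_k)\}_{k\in K}$ one has $\bar x\in X^*$ and $\bar\sigma=f^*$.
   Context: Setting: $f$ convex on $\mathbb{R}^n$; $D\subset\mathbb{R}^n$ convex closed with nonempty interior; $f$ attains its minimum $f^*$ on $D$; $X^*=\{x\in D:f(x)=f^*\}$, $x^*\in X^*$ fixed; $K=\{0,1,\dots\}$; $\operatorname{epi}(f,\mathbb{R}^n)=\{(x,\gamma):\gamma\ge f(x)\}$; for a set $Q$ (in $\mathbb{R}^n$ or $\mathbb{R}^{n+1}$), $W^1(u,Q)=\{a:\|a\|=1,\ \langle a,v-u\rangle\le0\ \forall v\in Q\}$. Method 3.2: choose $v'\in\operatorname{int}D$, $v''\in\operatorname{int}\operatorname{epi}(f,\mathbb{R}^n)$, a closed convex bounded $M_0\subset\mathbb{R}^n$ with $x^*\in M_0$, a closed convex $G_0\subset\mathbb{R}^{n+1}$ with $\operatorname{epi}(f,\mathbb{R}^n)\subset G_0$, a number $\bar\gamma\le\min\{f(x):x\in M_0\}$, and numbers $\varepsilon_k>0$, $k\in K$, with $\varepsilon_k\to0$; $i=k=0$. Step 1: $u_i=(y_i,\gamma_i)$ solves $\min\{\gamma:(x,\gamma)\in G_i,\ x\in M_k,\ \gamma\ge\bar\gamma\}$. Step 2: let $\bar u_i$ be the intersection point of the segment $[v'',u_i]$ with the boundary of $\operatorname{epi}(f,\mathbb{R}^n)$; if $\bar u_i=u_i$ and $y_i\in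 D$, stop. Step 3: if $\|\bar u_i-u_i\|>\varepsilon_k$, set $G_{i+1}=G_i\cap\{u:\langle b_i,u-\bar u_i\rangle\le0\}$ with $b_i\in W^1(\bar u_i,\operatorname{epi}(f,\mathbb{R}^n))$, $i\leftarrow i+1$, go to Step 1. Step 4: otherwise set $i_k=i$, $x_k=y_{i_k}$, $\sigma_k=\gamma_{i_k}$, and $G_{i+1}=S_i\cap\{u:\langle b_i,u-\bar u_i\rangle\le0\}$ with $b_i$ as in Step 3 and $S_i$ any closed convex set with $\operatorname{epi}(f,\mathbb{R}^n)\subset S_i$. Step 5: if $x_k\in D$ set $M_{k+1}=M_k$; otherwise let $\bar x_k$ be the intersection point of $[v',x_k]$ with the boundary of $D$ and set $M_{k+1}=M_k\cap\{x:\langle a_k,x-\bar x_k\rangle\le0\}$ with $a_k\in W^1(\bar x_k,D)$. Step 6: $i\leftarrow i+1$, $k\leftarrow k+1$; go to Step 1. *)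

(* Defs.v *)
(* R^n is modelled as row vectors 'rV[R]_n over an
   abstract R : realType (with its standard product topology); R^(n+1) is
   modelled as pairs 'rV[R]_n * R, i.e. u = (x, gamma), as in the paper. *)
From HB Require Import structures.
From mathcomp Require Import all_boot all_order all_algebra.
From mathcomp Require Import all_classical all_reals all_analysis.
Set Implicit Arguments. Unset Strict Implicit. Unset Printing Implicit Defensive.
Import Order.TTheory GRing.Theory Num.Theory.
Import numFieldNormedType.Exports.
Local Open Scope classical_set_scope.
Local Open Scope ring_scope.

Section Defs.
Variables (R : realType) (n : nat).
Notation vec := 'rV[R]_n.

Definition dot (u v : vec) : R := \sum_(j < n) u ord0 j * v ord0 j.
Definition enorm (u : vec) : R := Num.sqrt (dot u u).

Definition pdot (p q : vec * R) : R := dot p.1 q.1 + p.2 * q.2.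
Definition psub (p q : vec * R) : vec * R := (p.1 - q.1, p.2 - q.2).
Definition pnorm (p : vec * R) : R := Num.sqrt (pdot p p).

Definition vconvex_set (A : set vec) : Prop :=
  forall x y t, A x -> A y -> 0 <= t <= 1 -> A (t *: x + (1 - t) *: y).
Definition pconvex_set (A : set (vec * R)) : Prop :=
  forall p q t, A p -> A q -> 0 <= t <= 1 ->
    A (t *: p.1 + (1 - t) *: q.1, t * p.2 + (1 - t) * q.2).
Definition convex_fun (f : vec -> R) : Prop :=
  forall x y t, 0 <= t <= 1 ->
    f (t *: x + (1 - t) *: y) <= t * f x + (1 - t) * f y.
Definition bounded_vset (A : set vec) : Prop :=
  exists r : R, forall x, A x -> enorm x <= r.

Definition epi (f : vec -> R) : set (vec * R) := [set p | f p.1 <= p.2].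

Definition vboundary (A : set vec) : set vec := closure A `\` interior A.
Definition pboundary (A : set (vec * R)) : set (vec * R) :=
  closure A `\` interior A.

Definition vseg (a b : vec) : set vec :=
  [set x | exists t : R, 0 <= t <= 1 /\ x = a + t *: (b - a)].
Definition pseg (a b : vec * R) : set (vec * R) :=
  [set p | exists t : R, 0 <= t <= 1 /\
     p = (a.1 + t *: (b.1 - a.1), a.2 + t * (b.2 - a.2))].

Definition W1 (u : vec) (Q : set vec) : set vec :=
  [set a | enorm a = 1 /\ forall v, Q v -> dot a (v - u) <= 0].
Definition pW1 (u : vec * R) (Q : set (vec * R)) : set (vec * R) :=
  [set a | pnorm a = 1 /\ forall v, Q v -> pdot a (psub v u) <= 0].

Definition vhalf (a c : vec) : set vec := [set x | dot a (x - c) <= 0].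
Definition phalf (b c : vec * R) : set (vec * R) :=
  [set u | pdot b (psub u c) <= 0].

Definition Xstar (f : vec -> R) (D : set vec) (fstar : R) : set vec :=
  [set x | D x /\ f x = fstar].

(* A (nonterminating) run of Method 3.2, recorded by the global iteration
   counter i.  Data indexed by i: u i = (y_i, gamma_i), G i, ubar i, b i,
   S i, and kk i = the value of the counter k during iteration i.
   Data indexed by k: M k, xbar k, a k.  Iteration i is an "outer" iteration
   (goes through Step 4, i.e. i = i_k with k = kk i) iff
   ||ubar_i - u_i|| <= eps_(kk i); then x_k = y_i, sigma_k = gamma_i. *)
Definition is_outer (eps : nat -> R) (kk : nat -> nat)
  (u ubar : nat -> vec * R) (i : nat) : Prop :=
  pnorm (psub (ubar i) (u i)) <= eps (kk i).

Definition method32_run (f : vec -> R) (D : set vec) (v' : vec)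
  (v'' : vec * R) (M0 : set vec) (G0 : set (vec * R)) (gbar : R)
  (eps : nat -> R)
  (u ubar b : nat -> vec * R) (G S : nat -> set (vec * R)) (kk : nat -> nat)
  (M : nat -> set vec) (xbar a : nat -> vec) : Prop :=
  G 0 = G0 /\ M 0 = M0 /\ kk 0 = 0%N /\
   (* Step 1 *)
   (forall i, [/\ G i (u i), M (kk i) (u i).1, gbar <= (u i).2 &
      forall p : vec * R, G i p -> M (kk i) p.1 -> gbar <= p.2 ->
        (u i).2 <= p.2]) /\
   (* Step 2: ubar_i is the intersection of [v'', u_i] with bd epi; no stop *)
   (forall i, pseg v'' (u i) (ubar i) /\ pboundary (epi f) (ubar i)) /\
   (forall i, ~ (ubar i = u i /\ D (u i).1)) /\
   (forall i, pW1 (ubar i) (epi f) (b i)) /\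
   (* Step 3 *)
   (forall i, ~ is_outer eps kk u ubar i ->
      G i.+1 = G i `&` phalf (b i) (ubar i) /\ kk i.+1 = kk i) /\
   (* Steps 4, 5, 6 *)
   (forall i, is_outer eps kk u ubar i ->
      closed (S i) /\ pconvex_set (S i) /\ epi f `<=` S i /\
          G i.+1 = S i `&` phalf (b i) (ubar i) /\
          kk i.+1 = (kk i).+1 /\
          (D (u i).1 -> M (kk i).+1 = M (kk i)) /\
          (~ D (u i).1 ->
             [/\ vseg v' (u i).1 (xbar (kk i)),
                 vboundary D (xbar (kk i)),
                 W1 (xbar (kk i)) D (a (kk i)) &
                 M (kk i).+1 = M (kk i) `&` vhalf (a (kk i)) (xbar (kk i))])).

(* (xl, sl) is a limit point of the sequence (x_k, sigma_k)_k, i.e. of the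
   values u_i = (y_i, gamma_i) at the outer iterations i = i_0 < i_1 < ...:
   some subsequence (x_{k_j}, sigma_{k_j}) = u_{i_{k_j}} converges to it. *)
Definition limit_point_xs (eps : nat -> R) (kk : nat -> nat)
  (u ubar : nat -> vec * R) (l : vec * R) : Prop :=
  exists phi : nat -> nat,
    (forall j, (phi j < phi j.+1)%N) /\
    (forall j, is_outer eps kk u ubar (phi j)) /\
    (fun j => u (phi j)) @ \oo --> l.

End Defs.

(* Main.v *)
Require Import Defs.
From HB Require Import structures.
From mathcomp Require Import all_boot all_order all_algebra.
From mathcomp Require Import all_classical all_reals all_analysis.
From mathcomp Require Import ring lra.
Import Order.TTheory GRing.Theory Num.Theory.
Import numFieldNormedType.Exports.
Local Open Scope classical_set_scope.
Local Open Scope ring_scope.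

Section Helpers.
Context {R : realType} {n : nat}.
Implicit Types (x y w a : 'rV[R]_n).

Lemma h_entry_le x j : `|x ord0 j| <= `|x|.
Proof.
rewrite [leRHS]/Num.Def.normr /= mx_normrE.
by apply/bigmax_geP; right; exists (ord0, j).
Qed.

Lemma h_norm_le x e : 0 <= e -> (forall j, `|x ord0 j| <= e) -> `|x| <= e.
Proof.
move=> e0 H; rewrite /Num.Def.normr /= mx_normrE.
apply: bigmax_le => // -[i j] _ /=; rewrite (ord1 i); exact: H.
Qed.

Lemma h_dotB a x y : dot a (x - y) = dot a x - dot a y.
Proof. by rewrite /dot -sumrB; apply: eq_bigr => j _; rewrite !mxE mulrBr. Qed.

Lemma h_dotD a x y : dot a (x + y) = dot a x + dot a y.
Proof. by rewrite /dot -big_split; apply: eq_bigr => j _; rewrite !mxE mulrDr. Qed.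

Lemma h_dotZ a c x : dot a (c *: x) = c * dot a x.
Proof. by rewrite /dot mulr_sumr; apply: eq_bigr => j _; rewrite !mxE; ring. Qed.

Lemma h_dot_ge0 x : 0 <= dot x x.
Proof. by rewrite /dot; apply: sumr_ge0 => j _; rewrite -expr2 sqr_ge0. Qed.

Lemma h_sq_le_dot x j : x ord0 j * x ord0 j <= dot x x.
Proof.
rewrite /dot (bigD1 j) //= lerDl; apply: sumr_ge0 => i _; by rewrite -expr2 sqr_ge0.
Qed.

Lemma h_enorm1 a : enorm a = 1 -> dot a a = 1.
Proof.
move=> H; have := sqr_sqrtr (h_dot_ge0 a); rewrite -/(enorm a) H expr1n.
by move->.
Qed.

Lemma h_enorm1_entries a : enorm a = 1 -> forall j, `|a ord0 j| <= 1.
Proof.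
move=> /h_enorm1 H j; have := h_sq_le_dot a j; rewrite H => h.
rewrite ler_norml; apply/andP; split; nra.
Qed.

Lemma h_enorm1_norm a : enorm a = 1 -> `|a| <= 1.
Proof. by move=> H; apply: h_norm_le => //; exact: h_enorm1_entries. Qed.

Lemma h_dot_bound a w : (forall j, `|a ord0 j| <= 1) -> dot a w <= n%:R * `|w|.
Proof.
move=> Ha; apply: le_trans (ler_norm _) _; rewrite /dot.
apply: le_trans (ler_norm_sum _ _ _) _.
apply: le_trans (_ : \sum_(j < n) `|w| <= _).
  apply: ler_sum => j _; rewrite normrM.
  rewrite -[leRHS]mul1r; apply: ler_pM => //; by [apply: Ha | apply: h_entry_le].
by rewrite sumr_const card_ord mulr_natl.
Qed.

Lemma h_pnorm_le (p : 'rV[R]_n * R) e :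
  pnorm p <= e -> `|p.1| <= e /\ `|p.2| <= e.
Proof.
move=> H.
have e0 : 0 <= e by apply: le_trans H; exact: sqrtr_ge0.
have pd0 : 0 <= pdot p p.
  by rewrite /pdot; apply: addr_ge0; [exact: h_dot_ge0| rewrite -expr2 sqr_ge0].
have hs := sqr_sqrtr pd0; rewrite -/(pnorm p) expr2 in hs.
have hs0 : 0 <= pnorm p by exact: sqrtr_ge0.
have hpe : pdot p p <= e * e by rewrite -hs; nra.
have h1 : dot p.1 p.1 <= e * e.
  by apply: le_trans hpe; rewrite /pdot lerDl -expr2 sqr_ge0.
have h2 : p.2 * p.2 <= e * e.
  by apply: le_trans hpe; rewrite /pdot lerDr; exact: h_dot_ge0.
split.
  apply: h_norm_le => // j; have := h_sq_le_dot p.1 j => h3.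
  rewrite ler_norml; apply/andP; split; nra.
rewrite ler_norml; apply/andP; split; nra.
Qed.

Lemma h_small (d K : R) : (forall t, 0 < t -> t <= 1 -> d <= t * K) -> d <= 0.
Proof.
move=> H; rewrite leNgt; apply/negP => d0.
have K0 : 0 <= `|K| by [].
have den : 0 < d + `|K| + 1 by lra.
set t := d / (d + `|K| + 1).
have t0 : 0 < t by rewrite /t divr_gt0.
have t1 : t <= 1 by rewrite /t ler_pdivrMr // mul1r; lra.
have := H t t0 t1.
have tK : t * K <= t * `|K| by rewrite ler_pM2l // ler_norm.
have e : t * (d + `|K| + 1) = d by rewrite /t mulfVK // gt_eqF.
nra.
Qed.

Lemma h_tri3 (V : normedZmodType R) (x y z w : V) e1 e2 e3 :
  `|x - y| < e1 -> `|y - z| <= e2 -> `|z - w| < e3 -> `|x - w| < e1 + e2 + e3.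
Proof.
move=> h1 h2 h3.
have -> : x - w = (x - y) + (y - z) + (z - w).
  by rewrite !addrA subrK subrK.
apply: le_lt_trans (ler_normD _ _) _.
have := ler_normD (x - y) (y - z); lra.
Qed.

End Helpers.

Theorem theorem3p2p2 (R : realType) (n : nat)
  (f : 'rV[R]_n -> R) (D : set 'rV[R]_n) (xstar : 'rV[R]_n)
  (v' : 'rV[R]_n) (v'' : 'rV[R]_n * R) (M0 : set 'rV[R]_n)
  (G0 : set ('rV[R]_n * R)) (gbar : R) (eps : nat -> R)
  (u ubar b : nat -> 'rV[R]_n * R) (G S : nat -> set ('rV[R]_n * R))
  (kk : nat -> nat) (M : nat -> set 'rV[R]_n) (xbar a : nat -> 'rV[R]_n)
  (xl : 'rV[R]_n) (sl : R) :
  convex_fun f ->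
  vconvex_set D -> closed D -> interior D !=set0 ->
  D xstar -> (forall x, D x -> f xstar <= f x) ->
  interior D v' -> interior (epi f) v'' ->
  closed M0 -> vconvex_set M0 -> bounded_vset M0 -> M0 xstar ->
  closed G0 -> pconvex_set G0 -> epi f `<=` G0 ->
  (forall x, M0 x -> gbar <= f x) ->
  (forall k, 0 < eps k) -> eps @ \oo --> 0 ->
  method32_run f D v' v'' M0 G0 gbar eps u ubar b G S kk M xbar a ->
  limit_point_xs eps kk u ubar (xl, sl) ->
  Xstar f D (f xstar) xl /\ sl = f xstar.
Proof.
move=> Hf HDc HDcl _ HDx Hmin Hv' Hv'' _ _ _ HM0x _ _ HepiG0 Hgbar Heps Hepsc Hrun Hlim.
case: Hrun => HG0 [HM0 [Hkk0 [Hs1 [Hs2 [Hnostop [HW [Hs3 Hs4]]]]]]].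
case: Hlim => phi [Hphi [Hout Hcv]].
have kkS : forall i, (kk i <= kk i.+1)%N.
  move=> i; case: (pselect (is_outer eps kk u ubar i)) => Ho.
    by have [_ [_ [_ [_ [-> _]]]]] := Hs4 i Ho.
  by have [_ ->] := Hs3 i Ho.
have kkmono : forall i m, (kk i <= kk (i + m)%N)%N.
  move=> i; elim=> [|m IH]; first by rewrite addn0.
  by rewrite addnS; apply: leq_trans IH (kkS _).
have kkphi : forall j, (j <= kk (phi j))%N.
  elim=> [|j IH] //.
  have [_ [_ [_ [_ [Hk _]]]]] := Hs4 _ (Hout j).
  have := kkmono (phi j).+1 (phi j.+1 - (phi j).+1)%N.
  rewrite subnKC ?Hphi // Hk => h; apply: leq_trans h; by rewrite ltnS.
have Mstep : forall i, M (kk i.+1) `<=` M (kk i).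
  move=> i; case: (pselect (is_outer eps kk u ubar i)) => Ho.
    have [_ [_ [_ [_ [Hk [HD HnD]]]]]] := Hs4 i Ho; rewrite Hk.
    case: (pselect (D (u i).1)) => Hd; first by rewrite HD.
    by have [_ _ _ ->] := HnD Hd; move=> x [].
  by have [_ ->] := Hs3 i Ho.
have Mmono : forall i m, M (kk (i + m)%N) `<=` M (kk i).
  move=> i; elim=> [|m IH]; first by rewrite addn0.
  rewrite addnS; exact: subset_trans (Mstep _) IH.
have xsM : forall i, M (kk i) xstar.
  elim=> [|i IH]; first by rewrite Hkk0 HM0.
  case: (pselect (is_outer eps kk u ubar i)) => Ho; last by have [_ ->] := Hs3 i Ho.
  have [_ [_ [_ [_ [Hk [HD HnD]]]]]] := Hs4 i Ho; rewrite Hk.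
  case: (pselect (D (u i).1)) => Hd; first by rewrite HD.
  have [_ _ [_ HWa] ->] := HnD Hd; split => //; exact: HWa.
have epiG : forall i, epi f `<=` G i.
  elim=> [|i IH]; first by rewrite HG0.
  case: (pselect (is_outer eps kk u ubar i)) => Ho.
    have [_ [_ [HS [HG _]]]] := Hs4 i Ho; rewrite HG => p hp.
    by split; [exact: HS | exact: (HW i).2].
  have [HG _] := Hs3 i Ho; rewrite HG => p hp.
  by split; [exact: IH | exact: (HW i).2].
have gam : forall i, (u i).2 <= f xstar.
  move=> i; have [_ _ _ Hopt] := Hs1 i; apply: (Hopt (xstar, f xstar)) => /=.
  - by apply: epiG; rewrite /epi /=.
  - exact: xsM.
  - exact: Hgbar.
have Hcv' : forall e, 0 < e -> exists N, forall j, (N <= j)%N ->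
    `|xl - (u (phi j)).1| < e /\ `|sl - (u (phi j)).2| < e.
  move=> e e0; have [N _ HN] := cvg_ball Hcv e0.
  exists N => j /HN [h1 h2]; split; last exact: h2.
  by move: h1; rewrite -ball_normE.
have Heps' : forall e, 0 < e -> exists N, forall m, (N <= m)%N -> eps m < e.
  move=> e e0; have [N _ HN] := cvg_ball Hepsc e0.
  exists N => m /HN; rewrite /ball /= sub0r normrN => h.
  exact: le_lt_trans (ler_norm _) h.
have slle : sl <= f xstar.
  apply/ler_addgt0Pr => e e0; have [N HN] := Hcv' e e0.
  have [_ /ltr_normlP [h1 h2]] := HN N (leqnn N).
  have := gam (phi N); lra.
have Happ : forall d, 0 < d -> exists c, epi f c /\ `|xl - c.1| < d /\ `|sl - c.2| < d.
  move=> d d0; have d3 : 0 < d / 3 by rewrite divr_gt0.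
  have [N1 HN1] := Hcv' _ d3; have [N2 HN2] := Heps' _ d3.
  pose j := maxn N1 N2; pose i := phi j.
  have [hx hs] := HN1 j (leq_maxl _ _).
  have he := HN2 (kk i) (leq_trans (leq_maxr N1 N2) (kkphi j)).
  have [hb1 hb2] := h_pnorm_le _ _ (Hout j); rewrite /= -/i in hb1 hb2.
  have [_ [Hcl _]] := Hs2 i.
  have [c [Hc [hc1 hc2]]] := Hcl _ (nbhsx_ballx (ubar i) _ d3).
  exists c; split => //.
  have ed : d / 3 + d / 3 + d / 3 = d by field.
  rewrite -ball_normE /ball_ /= in hc1; rewrite /ball /= in hc2.
  split; rewrite -ed; apply: h_tri3.
  - exact: hx.
  - by rewrite distrC; apply: le_trans hb1 (ltW he).
  - exact: hc1.
  - exact: hs.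
  - by rewrite distrC; apply: le_trans hb2 (ltW he).
  - exact: hc2.
have Hint : forall t, 0 < t -> t <= 1 ->
    f ((1 - t) *: xl + t *: v''.1) <= (1 - t) * sl + t * v''.2.
  move=> t t0 t1.
  have /nbhs_ballP [r r0 Hr] := Hv''; rewrite /= in r0.
  have dpos : 0 < t * r / 2 by rewrite divr_gt0 // mulr_gt0.
  have [c [Hc [h1 h2]]] := Happ _ dpos.
  pose k := (1 - t) / t.
  have k0 : 0 <= k by rewrite /k divr_ge0 //; lra.
  have kr : k * (t * r / 2) = (1 - t) * r / 2 by rewrite /k; field; rewrite gt_eqF.
  pose w := (v''.1 + k *: (xl - c.1), v''.2 + k * (sl - c.2)).
  have Hw : epi f w.
    apply: Hr; split => /=.
      rewrite -ball_normE /ball_ /= opprD addrA subrr add0r normrN normrZ ger0_norm //.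
      have : k * `|xl - c.1| <= k * (t * r / 2) by rewrite ler_wpM2l // ltW.
      rewrite kr; lra.
    rewrite /ball /= opprD addrA subrr add0r normrN normrM ger0_norm //.
    have : k * `|sl - c.2| <= k * (t * r / 2) by rewrite ler_wpM2l // ltW.
    rewrite kr; lra.
  have t01 : 0 <= t <= 1 by apply/andP; split => //; exact: ltW.
  have := Hf w.1 c.1 t t01.
  have -> : t *: w.1 + (1 - t) *: c.1 = (1 - t) *: xl + t *: v''.1.
    apply/rowP => j; rewrite /w /k /= !mxE; field; by rewrite gt_eqF.
  move=> h; apply: le_trans h _.
  have ew : t * w.2 + (1 - t) * c.2 = (1 - t) * sl + t * v''.2.
    by rewrite /w /k /=; field; rewrite gt_eqF.
  rewrite -ew; rewrite /epi /= in Hw Hc.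
  apply: lerD; apply: ler_wpM2l => //; lra.
have fxl : f xl <= sl.
  pose z := (2 : R) *: xl - v''.1.
  rewrite -subr_le0; apply: (h_small _ (v''.2 + f z - sl - f xl)) => t t0 t1.
  pose q := 1 / (1 + t).
  have t1p : 0 < 1 + t by lra.
  have q01 : 0 <= q <= 1.
    apply/andP; split; first by rewrite /q divr_ge0 //; lra.
    by rewrite /q ler_pdivrMr ?mul1r; lra.
  have := Hf ((1 - t) *: xl + t *: v''.1) z q q01.
  have -> : q *: ((1 - t) *: xl + t *: v''.1) + (1 - q) *: z = xl.
    apply/rowP => j; rewrite /z /q !mxE; field; by rewrite gt_eqF.
  move=> h; have h2 := Hint t t0 t1.
  have e1 : (1 + t) * (q * ((1 - t) * sl + t * v''.2) + (1 - q) * f z)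
      = (1 - t) * sl + t * v''.2 + t * f z by rewrite /q; field; rewrite gt_eqF.
  have h3 : (1 + t) * f xl <= (1 - t) * sl + t * v''.2 + t * f z.
    rewrite -e1; apply: ler_wpM2l; first lra.
    apply: le_trans h _; apply: lerD => //; apply: ler_wpM2l => //.
    by case/andP: q01.
  nra.
have HDeq : D = closure D by apply/closure_id.
have xlD : D xl.
  rewrite HDeq => B /nbhs_ballP [e e0 HB]; rewrite /= in e0.
  have /nbhs_ballP [r r0 Hr] := Hv'; rewrite /= in r0.
  pose r' := r / 2.
  have r'0 : 0 < r' by rewrite divr_gt0.
  pose Bd := `|xl - v'| + 1.
  have Bd1 : 1 <= Bd by rewrite /Bd lerDr.
  pose K := 1 + 2 * n%:R * Bd / r'.
  have K1 : 1 <= K.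
    rewrite /K lerDl; apply: divr_ge0; last exact: ltW.
    apply: mulr_ge0; [apply: mulr_ge0 => //| lra].
  have K0 : 0 < K by lra.
  pose dl := Num.min 1 (e / K).
  have dl0 : 0 < dl by rewrite /dl lt_min ltr01 /= divr_gt0.
  have dl1 : dl <= 1 by rewrite /dl ge_min lexx.
  have dlK : dl * K <= e.
    by rewrite -ler_pdivlMr // /dl ge_min lexx orbT.
  have dle : dl <= e.
    apply: le_trans dlK; rewrite -[leLHS]mulr1; apply: ler_wpM2l => //; exact: ltW.
  have [N HN] := Hcv' _ dl0.
  pose i := phi N; pose i2 := phi N.+1.
  have [hx _] := HN N (leqnn N).
  have [hx2 _] := HN N.+1 (leqnSn N).
  rewrite -/i in hx; rewrite -/i2 in hx2.
  case: (pselect (D (u i).1)) => Hx.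
    exists (u i).1; split => //; apply: HB.
    by rewrite -ball_normE /ball_ /=; apply: lt_le_trans hx dle.
  have [_ [_ [_ [_ [Hk [_ HnD]]]]]] := Hs4 i (Hout N).
  have [[tau [tau01 Hxb]] [Hbd _] [Ha1 Ha2] HMk] := HnD Hx.
  set xb := xbar (kk i) in Hxb Hbd Ha2 HMk *.
  set a' := a (kk i) in Ha1 Ha2 HMk *.
  set x := (u i).1 in hx Hx Hxb *.
  set x2 := (u i2).1 in hx2.
  have HxbD : D xb by rewrite HDeq.
  exists xb; split => //; apply: HB; rewrite -ball_normE /ball_ /=.
  have Hx2M : M (kk i).+1 x2.
    rewrite -Hk; have := Mmono i.+1 (i2 - i.+1)%N.
    rewrite subnKC; last exact: Hphi.
    move=> HM; apply: HM; have [_ + _ _] := Hs1 i2; done.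
  rewrite HMk in Hx2M; case: Hx2M => _ Hx2h; rewrite /vhalf /= in Hx2h.
  have Hvr : D (v' + r' *: a').
    apply: Hr; rewrite -ball_normE /ball_ /= opprD addrA subrr add0r normrN normrZ.
    rewrite ger0_norm; last exact: ltW.
    have := h_enorm1_norm _ Ha1 => h.
    have : r' * `|a'| <= r' * 1 by apply: ler_wpM2l => //; exact: ltW.
    rewrite /r'; lra.
  have h1 := Ha2 _ Hvr.
  have ea : dot a' a' = 1 by exact: h_enorm1.
  pose g := dot a' (x - v').
  have e1 : v' + r' *: a' - xb = (- tau) *: (x - v') + r' *: a'.
    by rewrite Hxb; apply/rowP => j; rewrite !mxE; ring.
  rewrite e1 h_dotD !h_dotZ ea -/g in h1.
  have e2 : x2 - xb = (x2 - x) + (1 - tau) *: (x - v').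
    by rewrite Hxb; apply/rowP => j; rewrite !mxE; ring.
  rewrite e2 h_dotD h_dotZ -/g in Hx2h.
  have hb := h_dot_bound a' (x - x2) (h_enorm1_entries _ Ha1).
  have e3 : x2 - x = - (x - x2) by rewrite opprB.
  have e4 : dot a' (x2 - x) = - dot a' (x - x2).
    by rewrite e3 -scaleN1r h_dotZ mulN1r.
  rewrite e4 in Hx2h.
  have hxx2 : `|x - x2| < 2 * dl.
    have -> : 2 * dl = dl + dl by ring.
    apply: le_lt_trans (ler_distD xl x x2) _.
    by rewrite (distrC x xl); apply: ltrD.
  have nn0 : 0 <= n%:R :> R by [].
  have [tau0 tau1] : 0 <= tau /\ tau <= 1 by case/andP: tau01.
  have hg : r' <= g.
    case: (lerP 0 g) => g0.
      have : tau * g <= g by rewrite -[leRHS]mul1r; apply: ler_wpM2r.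
      lra.
    have : tau * g <= 0 by apply: mulr_ge0_le0 => //; exact: ltW.
    lra.
  have hnx : n%:R * `|x - x2| <= n%:R * (2 * dl) by apply: ler_wpM2l => //; exact: ltW.
  have htau : (1 - tau) * r' <= 2 * n%:R * dl by nra.
  have htau' : 1 - tau <= 2 * n%:R * dl / r' by rewrite ler_pdivlMr.
  have e5 : x - xb = (1 - tau) *: (x - v').
    by rewrite Hxb; apply/rowP => j; rewrite !mxE; ring.
  have hxv : `|x - v'| <= Bd.
    apply: le_trans (ler_distD xl x v') _; rewrite (distrC x xl) /Bd.
    by rewrite addrC; apply: lerD => //; apply: le_trans (ltW hx) dl1.
  have hxxb : `|x - xb| <= 2 * n%:R * dl / r' * Bd.
    rewrite e5 normrZ ger0_norm; last lra.
    apply: ler_pM => //; lra.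
  have eK : dl * K = dl + 2 * n%:R * dl / r' * Bd by rewrite /K; field; rewrite gt_eqF.
  apply: le_lt_trans (ler_distD x xl xb) _.
  have : `|xl - x| + `|x - xb| < dl * K by rewrite eK; apply: ltr_leD.
  move=> h; apply: lt_le_trans h dlK.
have := Hmin _ xlD => hm.
split; last by apply/eqP; rewrite eq_le slle /=; lra.
split => //; apply/eqP; rewrite eq_le; apply/andP; split => //; lra.
Qed.
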